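(* Let $X_t\subset X_{t+p}$ be finite simplicial complexes, let $\mathscr{S}_{t+p}$ be a cellular sheaf on $X_{t+p}$ whose stalks are finite-dimensional inner product spaces over $\mathbb{R}$ or $\mathbb{C}$, and let $\mathscr{S}_t$ be its pullback to $X_t$. Suppose each simplex of $X_{t+p}$ is oriented and the simplices of $X_t$ carry the same orientations. Then the spectrum of the persistent sheaf Laplacian $\Delta_q^{t,p}$ does not depend on the choice of orientations of the simplices of $X_{t+p}$ (with $X_t$ always carrying the inherited orientations).
   Context: A cellular sheaf assigns stalks $\mathscr{S}(\sigma)$ to simplices and linear restriction maps $\mathscr{S}_{\sigma\leqslant\tau}$ to face relations, functorially; the pullback $\mathscr{S}_t$ has the same stalks and restriction maps on $X_t$. $C^q(X;\mathscr{S})=\bigoplus_{\dim\sigma=q}\mathscr{S}(\sigma)$, distinct stalks orthogonal; $C^q(X_t;\mathscr{S}_t)$ is the subspace of $C^q(X_{t+p};\mathscr{S}_{t+p})$ spanned by stalks over simplices of $X_t$. The orientation determines signed incidence numbers: for $\tau=[v_0,\dots,v_n]$ and $\sigma=[v_0,\dots,\hat v_i,\dots,v_n]$, $[\sigma:\tau]=(-1)^i$ (or $(-1)^{i+1}$ if $\sigma$ is oppositely oriented), $0$ if $\sigma$ is not a codimension-one face. Coboundary $d_q|_{\mathscr{S}(\sigma)}=\sum_{\sigma\leqslant\tau}[\sigma:\tau]\mathscr{S}_{\sigma\leqslant\tau}$; $d^t,d^{t+p}$ denote those of the two complexes. Let $\mathbb{C}^{t,p}_{q+1}=\{e\in C^{q+1}(X_{t+p};\mathscr{S}_{t+p})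 : (d_q^{t+p})^*(e)\in C^q(X_t;\mathscr{S}_t)\}$, let $\eth_q^{t,p}:C^q(X_t;\mathscr{S}_t)\to\mathbb{C}^{t,p}_{q+1}$ be the adjoint of $(d_q^{t+p})^*|_{\mathbb{C}^{t,p}_{q+1}}$, and define $\Delta_q^{t,p}=(\eth_q^{t,p})^*\eth_q^{t,p}+d_{q-1}^t(d_{q-1}^t)^*$. *)

(* Defs.v *)
From HB Require Import structures.
From mathcomp Require Import all_boot all_order all_algebra.
Set Implicit Arguments. Unset Strict Implicit. Unset Printing Implicit Defensive.
Import Order.TTheory GRing.Theory Num.Theory.
Local Open Scope ring_scope.

Section PersistentSheafLaplacian.

(* scalar field F together with its conjugation cj (identity over the reals,
   complex conjugation over the complex numbers) *)
Variables (F : numFieldType) (cj : F -> F).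
Variable V : finType.

(* a simplex is a nonempty finite set of vertices; dim sigma = #|sigma| - 1 *)
Definition is_simplicial_complex (X : {set {set V}}) : Prop :=
  (forall s, s \in X -> s != set0) /\
  (forall s t, s \in X -> t != set0 -> t \subset s -> t \in X).

(* An orientation of a simplex is an ordering [v_0, ..., v_n] of its vertices
   (up to even permutations).  o s is the chosen ordering of s. *)
Definition is_orientation (X : {set {set V}}) (o : {set V} -> seq V) : Prop :=
  forall s, s \in X -> perm_eq (o s) (enum s).

(* number of inversions of a list w.r.t. a fixed reference order of V;
   two orderings of the same simplex define the same orientation iff
   their inversion numbers have the same parity *)
Fixpoint inversions (l : seq V) : nat :=
  match l with
  | [::] => 0
  | x :: l' => (count (fun y => enum_rank y < enum_rank x) l' + inversions l')%N
  end.

(* signed incidence number [s : t]: if t = [v_0,...,v_n] (its orientation o t)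
   and s = t \ {v_i}, then [s:t] = (-1)^i if o s is the same orientation as
   [v_0,..,^v_i,..,v_n] and (-1)^(i+1) otherwise; 0 if s is not a
   codimension-one face of t. *)
Definition incidence (o : {set V} -> seq V) (s t : {set V}) : F :=
  if (s \subset t) && (#|t| == #|s|.+1) then
    let l := o t in
    let i := find (fun x => x \notin s) l in
    let l' := filter (fun x => x \in s) l in
    (-1) ^+ (i + inversions l' + inversions (o s))
  else 0.

(* stalk over s : F^(d s) with its standard inner product;
   restriction map S_{s <= t} : F^(d s) -> F^(d t), as a matrix acting on
   column vectors *)
Variable d : {set V} -> nat.
Variable res : forall s t : {set V}, 'M[F]_(d t, d s).

Definition is_cellular_sheaf (X : {set {set V}}) : Prop :=
  (forall s, s \in X -> res s s = 1%:M) /\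
  (forall s t u, s \in X -> t \in X -> u \in X -> s \subset t -> t \subset u ->
     res s u = res t u *m res s t).

(* global index set: pairs (simplex s, coordinate of the stalk over s) *)
Definition idx := {s : {set V} & 'I_(d s)}.
Definition N := #|{: idx}|.
Definition ix (i : 'I_N) : idx := enum_val i.
Definition sx (i : 'I_N) : {set V} := tag (ix i).
Definition cx (i : 'I_N) : 'I_(d (sx i)) := tagged (ix i).

(* coordinate i belongs to C^k(X; S) *)
Definition inC (X : {set {set V}}) (k : nat) (i : 'I_N) : bool :=
  (sx i \in X) && (#|sx i| == k.+1).

Definition supported (P : 'I_N -> bool) (v : 'cV[F]_N) : Prop :=
  forall i, ~~ P i -> v i 0 = 0.

(* standard (sesquilinear) inner product; distinct stalks are orthogonal *)
Definition ip n (u v : 'cV[F]_n) : F := \sum_i u i 0 * cj (v i 0).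

Definition adj m n (A : 'M[F]_(m, n)) : 'M[F]_(n, m) := map_mx cj A^T.

(* coboundary d_k : C^k(X;S) -> C^(k+1)(X;S), extended by 0 to all of F^N *)
Definition cobound (o : {set V} -> seq V) (X : {set {set V}}) (k : nat)
  : 'M[F]_N :=
  \matrix_(j, i)
    if inC X k.+1 j && inC X k i && (sx i \subset sx j) then
      incidence o (sx i) (sx j) * res (sx i) (sx j) (cx j) (cx i)
    else 0.

(* d_(q-1), with d_(-1) = 0 *)
Definition cobound_prev o X (q : nat) : 'M[F]_N :=
  if q is q'.+1 then cobound o X q' else 0.

(* coordinates of C^q(X_t; S_t): the inclusion F^m -> F^N *)
Definition Cidx (Xt : {set {set V}}) q := [set i : 'I_N | inC Xt q i].
Definition dimC Xt q := #|Cidx Xt q|.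
Definition incl Xt q : 'M[F]_(N, dimC Xt q) :=
  \matrix_(i, k) (i == enum_val k)%:R.

(* membership in  C^{t,p}_{q+1} = { e in C^(q+1)(X_{t+p}) :
                                    (d_q^{t+p})^* e in C^q(X_t) } *)
Definition in_Ctp o (Xt X : {set {set V}}) q (e : 'cV[F]_N) : Prop :=
  supported (inC X q.+1) e /\ supported (inC Xt q) (adj (cobound o X q) *m e).

(* B represents eth_q^{t,p} : C^q(X_t) -> C^{t,p}_{q+1}, the adjoint of
   (d_q^{t+p})^* restricted to C^{t,p}_{q+1} *)
Definition is_eth o Xt X q (B : 'M[F]_(N, dimC Xt q)) : Prop :=
  (forall x, in_Ctp o Xt X q (B *m x)) /\
  (forall x e, in_Ctp o Xt X q e ->
     ip (B *m x) e = ip (incl Xt q *m x) (adj (cobound o X q) *m e)).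

(* Delta_q^{t,p} = (eth)^* eth + d^t_{q-1} (d^t_{q-1})^*  on C^q(X_t);
   (eth)^* is (d_q^{t+p})^* restricted to C^{t,p}_{q+1} *)
Definition pers_laplacian o Xt X q (B : 'M[F]_(N, dimC Xt q))
  : 'M[F]_(dimC Xt q) :=
  adj (incl Xt q) *m adj (cobound o X q) *m B
  + adj (incl Xt q) *m cobound_prev o Xt q *m adj (cobound_prev o Xt q)
      *m incl Xt q.

End PersistentSheafLaplacian.

Definition orientation_independence (F : numFieldType) (cj : F -> F) : Prop :=
  forall (V : finType) (Xt X : {set {set V}}) (q : nat)
         (d : {set V} -> nat) (res : forall s t : {set V}, 'M[F]_(d t, d s))
         (o1 o2 : {set V} -> seq V)
         (B1 B2 : 'M[F]_(N d, dimC d Xt q)),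
    is_simplicial_complex X -> is_simplicial_complex Xt -> Xt \subset X ->
    @is_cellular_sheaf F V d res X ->
    is_orientation X o1 -> is_orientation X o2 ->
    @is_eth F cj V d res o1 Xt X q B1 -> @is_eth F cj V d res o2 Xt X q B2 ->
    char_poly (@pers_laplacian F cj V d res o1 Xt X q B1)
      = char_poly (@pers_laplacian F cj V d res o2 Xt X q B2) /\
    (forall a, eigenvalue (@pers_laplacian F cj V d res o1 Xt X q B1) a =
               eigenvalue (@pers_laplacian F cj V d res o2 Xt X q B2) a).

(* Main.v *)
Require Import Defs.
From HB Require Import structures.
From mathcomp Require Import all_boot all_order all_algebra.
From mathcomp Require Import zify ring.
Set Implicit Arguments. Unset Strict Implicit. Unset Printing Implicit Defensive.
Import Order.TTheory GRing.Theory Num.Theory.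

Section Comb.
Variable V : finType.

Lemma filter_notin_one (s : {set V}) (x : V) (l : seq V) :
  uniq l -> x \in l -> x \notin s -> {in l, forall y, y \notin s -> y = x} ->
  filter (fun y => y \notin s) l = [:: x].
Proof.
elim: l => [//|a l IH] /= /andP[anl ul] xin xs hall.
case: (boolP (a \in s)) => ains /=.
  have ax : a != x by apply/eqP => ax; rewrite -ax ains in xs.
  rewrite IH //.
  - by move: xin; rewrite inE eq_sym (negbTE ax).
  - by move=> y yl ys; apply: hall => //; rewrite inE yl orbT.
have ax : a = x by apply: hall; rewrite ?inE ?eqxx.
subst a. congr (_ :: _).
apply/eqP; rewrite -[_ == _]negbK -has_filter; apply/hasPn => y yl.
apply/negP => ys. have := hall y; rewrite inE yl orbT => /(_ isT ys) yx.
by move: anl; rewrite -yx yl.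
Qed.

Lemma count_split (p q : pred V) l :
  count p l = (count p (filter q l) + count p (filter (predC q) l))%N.
Proof.
elim: l => [//|a l IH] /=; case: (q a) => /=; rewrite IH; lia.
Qed.

Lemma parity_key (s : {set V}) (x : V) (l : seq V) :
  uniq l -> x \in l -> x \notin s -> {in l, forall y, y \notin s -> y = x} ->
  odd (find (fun y => y \notin s) l + inversions (filter (fun y => y \in s) l))
  = odd (inversions l + count (fun y => enum_rank y < enum_rank x) l).
Proof.
elim: l => [//|a l IH] /= uall xin xs hall.
move: (uall) => /andP[anl ul].
case: (boolP (a \in s)) => ains /=.
  have ax : a != x by apply/eqP => ax; rewrite -ax ains in xs.
  have xl : x \in l by move: xin; rewrite inE eq_sym (negbTE ax).
  have hall' : {in l, forall y, y \notin s -> y = x}.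
    by move=> y yl ys; apply: hall => //; rewrite inE yl orbT.
  have := IH ul xl xs hall'.
  rewrite (count_split (fun y => enum_rank y < enum_rank a) (fun y => y \in s) l).
  rewrite (@filter_notin_one s x l) //= addn0.
  have hr : (enum_rank a < enum_rank x) (+) (enum_rank x < enum_rank a).
    case: (ltngtP (enum_rank a) (enum_rank x)) => // /val_inj/enum_rank_inj ax'.
    by rewrite ax' eqxx in ax.
  move: hr; rewrite !oddD !oddb.
  move: (enum_rank a < enum_rank x) (enum_rank x < enum_rank a) => b1 b2.
  move: (odd _) (odd _) (odd _) (odd _) (odd _) => c1 c2 c3 c4 c5.
  by case: b1; case: b2; case: c1; case: c2; case: c3; case: c4; case: c5.
have ax : a = x by apply: hall; rewrite ?inE ?eqxx.
subst a.
have -> : filter (fun y => y \in s) l = l.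
  apply/all_filterP/allP => y yl; apply/negPn/negP => ys.
  have := hall y; rewrite inE yl orbT => /(_ isT ys) yx.
  by move: anl; rewrite -yx yl.
rewrite ltnn /= !oddD.
move: (odd (inversions l)) (odd (count _ l)) => u v.
by case: u; case: v.
Qed.

End Comb.

Section Main.
Local Open Scope ring_scope.
Variables (F : numFieldType) (cj : F -> F).
Hypotheses (cj0 : cj 0 = 0) (cj1 : cj 1 = 1) (cjN : forall x, cj (- x) = - cj x)
  (cjpos : forall x, 0 <= x * cj x) (cjdef : forall x, x * cj x = 0 -> x = 0).
Variables (V : finType) (d : {set V} -> nat)
  (res : forall s t : {set V}, 'M[F]_(d t, d s)) (o1 o2 : {set V} -> seq V)
  (X Xt : {set {set V}}) (q : nat).
Hypotheses (or1 : is_orientation X o1) (or2 : is_orientation X o2)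
  (sXt : Xt \subset X).

Local Open Scope ring_scope.
Local Notation sg n := ((-1 : F) ^+ n).
Definition eps (s : {set V}) : F := sg (inversions (o1 s) + inversions (o2 s))%N.

Lemma sgK n : sg n * sg n = 1.
Proof. by rewrite -expr2 sqrr_sign. Qed.

Lemma face_elt (s t : {set V}) : s \subset t -> #|t| = (#|s|).+1 ->
  exists x, [/\ x \in t, x \notin s & forall y, y \in t -> y \notin s -> y = x].
Proof.
move=> st ct.
have : #|t :\: s| == 1%N by rewrite cardsD (setIidPr st) ct subSnn.
case/cards1P => x hx.
have : x \in t :\: s by rewrite hx set11.
rewrite inE => /andP[xs xt].
exists x; split => // y yt ys.
have : y \in t :\: s by rewrite inE ys yt.
by rewrite hx inE => /eqP.
Qed.

Lemma incidence_flip s t : s \in X -> t \in X ->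
  incidence F o2 s t = eps s * eps t * incidence F o1 s t.
Proof.
move=> sX tX; rewrite /incidence.
case: ifP => [/andP[st /eqP ct]|_]; last by rewrite mulr0.
have [x [xt xs hy]] := face_elt st ct.
have key o : is_orientation X o ->
  sg (find (fun y => y \notin s) (o t)
      + inversions (filter (fun y => y \in s) (o t)) + inversions (o s))%N
  = sg (inversions (o t) + count (fun y => enum_rank y < enum_rank x) (enum t))%N
    * sg (inversions (o s)).
  move=> ho; have pt := ho t tX.
  rewrite exprD; congr (_ * _).
  rewrite -signr_odd (@parity_key _ s x).
  - by rewrite signr_odd (permP pt).
  - by rewrite (perm_uniq pt) enum_uniq.
  - by rewrite (perm_mem pt) mem_enum.
  - by [].
  - by move=> y; rewrite (perm_mem pt) mem_enum; exact: hy.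
rewrite (key o1 or1) (key o2 or2) /eps !exprD.
set a1 := sg (inversions (o1 t)); set a2 := sg (inversions (o2 t)).
set b1 := sg (inversions (o1 s)); set b2 := sg (inversions (o2 s)).
set c := sg _.
have h1 : a1 * a1 = 1 by apply: sgK.
have h2 : b1 * b1 = 1 by apply: sgK.
transitivity ((b1 * b1) * (a1 * a1) * (a2 * c * b2)); first by rewrite h1 h2 !mul1r.
ring.
Qed.

Lemma cjsg n y : cj (sg n * y) = sg n * cj y.
Proof.
by rewrite -signr_odd; case: (odd n); rewrite ?expr0 ?expr1 ?mul1r ?mulN1r ?cjN.
Qed.

Lemma cjsgr n y : cj (y * sg n) = cj y * sg n.
Proof. by rewrite mulrC cjsg mulrC. Qed.

Definition Dm : 'M[F]_(N d) := diag_mx (\row_i eps (sx i)).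

Lemma DD : Dm *m Dm = 1%:M.
Proof.
apply/matrixP => i j; rewrite mul_diag_mx !mxE.
by case: eqP => _ /=; rewrite ?mulr0n ?mulr1n ?mulr0 ?sgK.
Qed.

Lemma DDr m (M : 'M[F]_(m, N d)) : M *m Dm *m Dm = M.
Proof. by rewrite -mulmxA DD mulmx1. Qed.

Lemma DDl n (M : 'M[F]_(N d, n)) : Dm *m (Dm *m M) = M.
Proof. by rewrite mulmxA DD mul1mx. Qed.

Lemma cobound_flip (Y : {set {set V}}) k : Y \subset X ->
  cobound res o2 Y k = Dm *m cobound res o1 Y k *m Dm.
Proof.
move=> sY; apply/matrixP => j i; rewrite mul_mx_diag mul_diag_mx !mxE.
case: ifP => [/andP[/andP[hj hi] _]|_]; last by rewrite mulr0 mul0r.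
move: hj hi; rewrite /inC => /andP[hj _] /andP[hi _].
rewrite incidence_flip; try by apply: (subsetP sY).
move: (incidence F o1 _ _) (res _ _ _ _) (eps (sx i)) (eps (sx j)) => a r e1 e2.
ring.
Qed.

Lemma cobound_prev_flip (Y : {set {set V}}) k : Y \subset X ->
  cobound_prev res o2 Y k = Dm *m cobound_prev res o1 Y k *m Dm.
Proof.
case: k => [|k] sY /=; first by rewrite mulmx0 mul0mx.
exact: cobound_flip.
Qed.

Lemma adj_conj (A : 'M[F]_(N d)) : adj cj (Dm *m A *m Dm) = Dm *m adj cj A *m Dm.
Proof.
apply/matrixP => i j; rewrite !mul_mx_diag !mul_diag_mx !mxE.
rewrite /eps cjsgr cjsg.
move: (cj _) ((-1) ^+ _) ((-1) ^+ _) => a b c; ring.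
Qed.

Definition ev (k : 'I_(dimC d Xt q)) : 'I_(N d) := enum_val k.
Definition Dp : 'M[F]_(dimC d Xt q) := diag_mx (\row_k eps (sx (ev k))).

Lemma DpDp : Dp *m Dp = 1%:M.
Proof.
apply/matrixP => i j; rewrite mul_diag_mx !mxE.
by case: eqP => _ /=; rewrite ?mulr0n ?mulr1n ?mulr0 ?sgK.
Qed.

Lemma inclD : Dm *m incl F d Xt q = incl F d Xt q *m Dp.
Proof.
apply/matrixP => i k; rewrite mul_mx_diag mul_diag_mx !mxE.
by case: eqP => [->|_] /=; rewrite ?mulr1n ?mulr0n ?mulr1 ?mul1r ?mulr0 ?mul0r.
Qed.

Lemma adjinclD : adj cj (incl F d Xt q) *m Dm = Dp *m adj cj (incl F d Xt q).
Proof.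
apply/matrixP => k i; rewrite mul_mx_diag mul_diag_mx !mxE.
by case: eqP => [->|_] /=; rewrite ?mulr1n ?mulr0n ?cj1 ?cj0 ?mulr1 ?mul1r ?mulr0 ?mul0r.
Qed.

Lemma ip_D (u v : 'cV[F]_(N d)) : ip cj (Dm *m u) v = ip cj u (Dm *m v).
Proof.
rewrite /ip; apply: eq_bigr => i _; rewrite !mul_diag_mx !mxE /eps cjsg.
by rewrite mulrCA mulrA.
Qed.

Lemma ipBl n (u v w : 'cV[F]_n) : ip cj (u - v) w = ip cj u w - ip cj v w.
Proof. by rewrite /ip -sumrB; apply: eq_bigr => i _; rewrite !mxE mulrBl. Qed.

Lemma ip_def n (w : 'cV[F]_n) : ip cj w w = 0 -> w = 0.
Proof.
move=> h; apply/matrixP => i j; rewrite (ord1 j) !mxE.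
apply: cjdef; exact: (psumr_eq0P (fun i _ => cjpos (w i 0)) h).
Qed.

Lemma supD P (v : 'cV[F]_(N d)) : supported P v -> supported P (Dm *m v).
Proof. by move=> h i /h; rewrite mul_diag_mx mxE => ->; rewrite mulr0. Qed.

Lemma supB P (u v : 'cV[F]_(N d)) :
  supported P u -> supported P v -> supported P (u - v).
Proof. by move=> hu hv i hi; rewrite !mxE hu // hv // subr0. Qed.


Lemma eth_uniq o (B B' : 'M[F]_(N d, dimC d Xt q)) :
  is_eth cj res o X B -> is_eth cj res o X B' -> B = B'.
Proof.
move=> [h1 h2] [h1' h2']; apply/matrixP => i k.
pose x : 'cV[F]_(dimC d Xt q) := delta_mx k 0.
pose w := B *m x - B' *m x.
have Cw : in_Ctp cj res o Xt X q w.
  split; first by apply: supB; [exact: (h1 x).1 | exact: (h1' x).1].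
  rewrite /w mulmxBr; apply: supB; [exact: (h1 x).2 | exact: (h1' x).2].
have : ip cj w w = 0 by rewrite {1}/w ipBl h2 // h2' // subrr.
move/ip_def/eqP; rewrite subr_eq0 => /eqP/(congr1 (fun M : 'cV[F]_(N d) => M i 0)).
by rewrite /x -!colE !mxE.
Qed.

Lemma eth_flip (B1 : 'M[F]_(N d, dimC d Xt q)) :
  is_eth cj res o1 X B1 -> is_eth cj res o2 X (Dm *m B1 *m Dp).
Proof.
move=> [h1 h2].
have A2 : adj cj (cobound res o2 X q) = Dm *m adj cj (cobound res o1 X q) *m Dm.
  by rewrite cobound_flip // adj_conj.
split.
  move=> x; rewrite -!mulmxA; split; first exact/supD/(h1 _).1.
  by rewrite A2 -!mulmxA DDl; apply/supD/(h1 _).2.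
move=> x e [Se Ae].
have Ce : in_Ctp cj res o1 Xt X q (Dm *m e).
  split; first exact: supD.
  have -> : adj cj (cobound res o1 X q) *m (Dm *m e)
          = Dm *m (adj cj (cobound res o2 X q) *m e).
    by rewrite A2 !mulmxA DD mul1mx.
  exact: supD.
rewrite -!mulmxA ip_D h2 // mulmxA -inclD -mulmxA ip_D A2 -!mulmxA.
by rewrite !mulmxA.
Qed.

Lemma lap_flip (B1 : 'M[F]_(N d, dimC d Xt q)) :
  pers_laplacian cj res o2 X (Dm *m B1 *m Dp)
  = Dp *m pers_laplacian cj res o1 X B1 *m Dp.
Proof.
rewrite /pers_laplacian cobound_flip // adj_conj cobound_prev_flip // adj_conj.
rewrite mulmxDr mulmxDl !mulmxA adjinclD !DDr.
by rewrite -(mulmxA _ Dm (incl _ _ _ _)) inclD !mulmxA.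
Qed.

End Main.

Local Open Scope ring_scope.

Lemma char_poly_conj (R : comNzRingType) n (P A : 'M[R]_n) :
  P *m P = 1%:M -> char_poly (P *m A *m P) = char_poly A.
Proof.
move=> PP; rewrite /char_poly.
pose P' := map_mx (@polyC R) P.
have P'P' : P' *m P' = 1%:M by rewrite /P' -map_mxM PP map_mx1.
have E : map_mx (@polyC R) (P *m A *m P) = P' *m map_mx (@polyC R) A *m P'.
  by rewrite !map_mxM.
have -> : char_poly_mx (P *m A *m P) = P' *m char_poly_mx A *m P'.
  rewrite /char_poly_mx E mulmxBr mulmxBl.
  by rewrite scalar_mxC -(mulmxA _%:M) P'P' mulmx1.
by rewrite !det_mulmx mulrC mulrA -det_mulmx P'P' det1 mul1r.
Qed.

Lemma generic_indep (F : numFieldType) (cj : F -> F) :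
  cj 0 = 0 -> cj 1 = 1 -> (forall x, cj (- x) = - cj x) ->
  (forall x, 0 <= x * cj x) -> (forall x, x * cj x = 0 -> x = 0) ->
  orientation_independence cj.
Proof.
move=> c0 c1 cN cp cd V Xt X q d res o1 o2 B1 B2 _ _ sXt _ or1 or2 e1 e2.
have eB : B2 = Dm F d o1 o2 *m B1 *m Dp F d o1 o2 Xt q.
  apply: (eth_uniq cp cd e2); exact: (eth_flip cN or1 or2 e1).
have EL : pers_laplacian cj res o2 X B2
    = Dp F d o1 o2 Xt q *m pers_laplacian cj res o1 X B1 *m Dp F d o1 o2 Xt q.
  by rewrite eB (lap_flip c0 c1 cN res or1 or2 sXt).
have CP : char_poly (pers_laplacian cj res o1 X B1)
        = char_poly (pers_laplacian cj res o2 X B2).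
  by rewrite EL char_poly_conj // DpDp.
split => // a; by rewrite !eigenvalue_root_char CP.
Qed.

Local Close Scope ring_scope.

Theorem mainTheorem4 :
  (forall R : realFieldType, orientation_independence (F := R) id) /\
  (forall C : numClosedFieldType, orientation_independence (F := C) Num.conj).
Proof.
split.
  move=> R; apply: generic_indep => //.
  - by move=> x; rewrite -expr2 sqr_ge0.
  - by move=> x /eqP; rewrite mulf_eq0 orbb => /eqP.
move=> C; apply: generic_indep.
- exact: conjC0.
- exact: conjC1.
- by move=> x; rewrite rmorphN.
- exact: mul_conjC_ge0.
- by move=> x /eqP; rewrite mul_conjC_eq0 => /eqP.
Qed.
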